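(* Let $T$ be a bounded linear operator on a complex Hilbert space. If $T$ is coquasiposinormal and $T^n$ is quasiposinormal for some integer $n\ge1$, then $T^m$ is both quasiposinormal and coquasiposinormal for every integer $m\ge1$; that is, $\mathcal{N}(T^m)=\mathcal{N}(T^{*m})$ for every $m\ge1$.
   Context: $\mathcal{N}(A)$ denotes the kernel of $A$. An operator $A$ is quasiposinormal if $\mathcal{N}(A)\subseteq\mathcal{N}(A^* )$ (equivalently $\overline{\mathcal{R}(A)}\subseteq\overline{\mathcal{R}(A^* )}$), and coquasiposinormal if $\mathcal{N}(A^* )\subseteq\mathcal{N}(A)$. *)

(* Defs.v *)
From HB Require Import structures.
From mathcomp Require Import all_boot all_order all_algebra.
From mathcomp Require Import reals.
From mathcomp Require Import complex.
Set Implicit Arguments. Unset Strict Implicit. Unset Printing Implicit Defensive.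
Import Order.TTheory GRing.Theory Num.Theory.
Local Open Scope ring_scope.

Notation cplx R := (complex (Real.sort R)).

Definition is_inner_product (R : realType) (V : lmodType (cplx R))
    (ip : V -> V -> cplx R) : Prop :=
  [/\ forall (a : cplx R) (x y z : V), ip (a *: x + y) z = a * ip x z + ip y z,
      forall x y : V, ip x y = (ip y x)^*,
      forall x : V, 0 <= ip x x
    & forall x : V, ip x x = 0 -> x = 0].

Definition hnorm (R : realType) (V : lmodType (cplx R))
    (ip : V -> V -> cplx R) (x : V) : R :=
  Num.sqrt (complex.Re (ip x x)).

Definition is_complete (R : realType) (V : lmodType (cplx R))
    (ip : V -> V -> cplx R) : Prop :=
  forall u : nat -> V,
    (forall eps : R, 0 < eps -> exists N : nat,
        forall m n : nat, (N <= m)%N -> (N <= n)%N ->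
          hnorm ip (u m - u n) < eps) ->
    exists l : V, forall eps : R, 0 < eps -> exists N : nat,
        forall n : nat, (N <= n)%N -> hnorm ip (u n - l) < eps.

Definition is_hilbert (R : realType) (V : lmodType (cplx R))
    (ip : V -> V -> cplx R) : Prop :=
  is_inner_product ip /\ is_complete ip.

Definition bounded_op (R : realType) (V : lmodType (cplx R))
    (ip : V -> V -> cplx R) (T : V -> V) : Prop :=
  (forall (a : cplx R) (x y : V), T (a *: x + y) = a *: T x + T y) /\
  exists M : R, forall x : V, hnorm ip (T x) <= M * hnorm ip x.

Definition is_adjoint (R : realType) (V : lmodType (cplx R))
    (ip : V -> V -> cplx R) (T S : V -> V) : Prop :=
  forall x y : V, ip (T x) y = ip x (S y).

Definition kernel (R : realType) (V : lmodType (cplx R)) (A : V -> V) : V -> Prop :=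
  fun x => A x = 0.

Definition ker_sub (R : realType) (V : lmodType (cplx R)) (A B : V -> V) : Prop :=
  forall x : V, kernel A x -> kernel B x.

Definition quasiposinormal (R : realType) (V : lmodType (cplx R))
    (A Astar : V -> V) : Prop := ker_sub A Astar.

Definition coquasiposinormal (R : realType) (V : lmodType (cplx R))
    (A Astar : V -> V) : Prop := ker_sub Astar A.

Definition opow (R : realType) (V : lmodType (cplx R)) (n : nat) (A : V -> V)
  : V -> V := iter n A.

(* Main.v *)
Require Import Defs.
From HB Require Import structures.
From mathcomp Require Import all_boot all_order all_algebra.
From mathcomp Require Import reals complex.
Import Order.TTheory GRing.Theory Num.Theory.
Local Open Scope ring_scope.

Lemma iter_fix0 (V : zmodType) (f : V -> V) k : f 0 = 0 -> iter k f 0 = 0.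
Proof. by move=> h; elim: k => //= k ->. Qed.

Lemma dbl0 (V : zmodType) (a : V) : a = a + a -> a = 0.
Proof. by move=> h; have := congr1 (fun z => z - a) h; rewrite addrK subrr. Qed.

Theorem theorem5p6 (R : realType) (V : lmodType (cplx R))
    (ip : V -> V -> cplx R) (T Tstar : V -> V) :
  is_hilbert ip ->
  bounded_op ip T ->
  is_adjoint ip T Tstar ->
  coquasiposinormal T Tstar ->
  (exists n : nat, (1 <= n)%N /\ quasiposinormal (opow n T) (opow n Tstar)) ->
  forall m : nat, (1 <= m)%N ->
    quasiposinormal (opow m T) (opow m Tstar) /\
    coquasiposinormal (opow m T) (opow m Tstar).
Proof.
move=> [[ipl ipc ipp ipd] _] [Tl _] adj co [n [n1 qn]] m m1.
have ip0l z : ip 0 z = 0.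
  apply: dbl0; have := ipl 1 0 0 z; by rewrite scale1r addr0 mul1r.
have ip0r z : ip z 0 = 0 by rewrite ipc ip0l; exact: (rmorph0 conjc).
have T0 : T 0 = 0.
  have h := Tl 1 0 0; rewrite !scale1r !addr0 in h; by apply: (addrI (T 0)); rewrite addr0 -h.
have Ts0 : Tstar 0 = 0.
  apply: ipd; by rewrite -adj ip0r.
have KTTs y : T (Tstar y) = 0 -> Tstar y = 0.
  by move=> h; apply: ipd; rewrite -adj h ip0l.
have KTsT x : Tstar (T x) = 0 -> T x = 0.
  by move=> h; apply: ipd; rewrite adj h ip0r.
have A k x : iter k.+1 Tstar x = 0 -> Tstar x = 0.
  elim: k x => [//|k IH] x h.
  apply: KTTs; apply: co; apply: IH; by rewrite -iterSr.
have B x : T x = 0 -> Tstar x = 0.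
  move=> h; case: n n1 qn => [//|n'] _ qn.
  apply: (A n'); apply: qn; rewrite /kernel /opow iterSr h; exact: iter_fix0.
have C k x : iter k.+1 T x = 0 -> T x = 0.
  elim: k x => [//|k IH] x h.
  apply: KTsT; apply: B; apply: IH; by rewrite -iterSr.
case: m m1 => [//|m'] _; split=> x.
- rewrite /kernel /opow => h; rewrite iterSr (B _ (C _ _ h)); exact: iter_fix0.
- rewrite /kernel /opow => h; rewrite iterSr (co _ (A _ _ h)); exact: iter_fix0.
Qed.
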